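(* Let $k$ be a divisor of $n$ and let $X_k$ be the set of unordered partitions of $\{1,\dots,n\}$ into $k$ cells each of size $n/k$, with the natural action of $S_n$. If $\pi\in S_n$ has $c$ cycles, then the number of elements of $X_k$ fixed by $\pi$ is at most $k^c$. *)

(* Defs.v *)
From mathcomp Require Import all_boot all_fingroup.
Set Implicit Arguments. Unset Strict Implicit. Unset Printing Implicit Defensive.

Definition equipartitions (n k : nat) : {set {set {set 'I_n}}} :=
  [set P : {set {set 'I_n}} | [&& partition P [set: 'I_n], #|P| == k
                                 & [forall B in P, #|B| == n %/ k]]].

Definition perm_act_partition (n : nat) (pi : 'S_n) (P : {set {set 'I_n}})
  : {set {set 'I_n}} := [set [set pi x | x in B] | B : {set 'I_n} in P].

(* number of cycles of pi (including fixed points) *)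
Definition ncycles (n : nat) (pi : 'S_n) : nat := #|porbits pi|.

(* Main.v *)
Require Import Defs.
From mathcomp Require Import all_boot all_fingroup.

Set Implicit Arguments. Unset Strict Implicit. Unset Printing Implicit Defensive.

Lemma lab_exists (T : finType) (P : {set {set T}}) (hP : partition P [set: T]) :
  exists g : {ffun T -> 'I_#|P|},
    (forall x y, (g x == g y) = (y \in pblock P x)) /\ (forall i, exists x, g x = i).
Proof.
case/and3P: hP => /eqP hcov htriv h0.
have memP x : pblock P x \in P by apply: pblock_mem; rewrite hcov inE.
exists [ffun x => enum_rank_in (memP x) (pblock P x)]; split.
- move=> x y; rewrite !ffunE -eq_pblock ?hcov ?inE //.
  apply/eqP/eqP => [h|e].
    exact: (enum_rank_in_inj (memP x) (memP y) h).
  transitivity (enum_rank_in (memP x) (pblock P y)).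
    exact: (congr1 (enum_rank_in (memP x)) e).
  exact: eq_enum_rank_in (memP y).
- move=> i.
  have Bi : enum_val i \in P := enum_valP i.
  have : enum_val i != set0 by apply: contraNneq h0 => <-.
  case/set0Pn => x hx; exists x; rewrite ffunE.
  have pb : pblock P x = enum_val i := def_pblock htriv Bi hx.
  transitivity (enum_rank_in (memP x) (enum_val i)).
    exact: (congr1 (enum_rank_in (memP x)) pb).
  rewrite (eq_enum_rank_in (memP x) Bi) //.
  exact: enum_valK_in.
Qed.

Lemma exists_sigma (k : nat) (T : finType) (pi : {perm T}) (g : T -> 'I_k)
  (gsurj : forall i, exists x, g x = i)
  (hg : forall x y, (g (pi x) == g (pi y)) = (g x == g y)) :
  exists s : {perm 'I_k}, forall x, g (pi x) = s (g x).
Proof.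
have [xi hxi] := fin_all_exists gsurj.
have rinj : injective (fun i => g (pi (xi i))).
  by move=> i j /eqP; rewrite hg !hxi => /eqP.
exists (perm rinj) => x; rewrite permE /=.
by apply/eqP; rewrite hg hxi.
Qed.

Lemma iter_S (k : nat) (T : finType) (pi : {perm T}) (s : {perm 'I_k})
  (f : T -> 'I_k) (hf : forall x, f (pi x) = s (f x)) :
  forall i y, f ((pi ^+ i)%g y) = (s ^+ i)%g (f y).
Proof.
elim=> [|i IH] y; first by rewrite !expg0 !perm1.
by rewrite !expgSr !permM hf IH.
Qed.

Lemma bound_Ss (T : finType) (k : nat) (pi : {perm T}) (s : {perm 'I_k}) :
  #|[set f : {ffun T -> 'I_k} | [forall x, f (pi x) == s (f x)]]|
    <= k ^ #|porbits pi|.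
Proof.
set Ss := [set f : {ffun T -> 'I_k} | _].
pose O := {B : {set T} | B \in porbits pi}.
have [xB hxB] : exists xB : O -> T, forall B, xB B \in val B.
  apply: (@fin_all_exists O (fun _ => T) (fun B x => x \in val B)) => -[B /= /imsetP [y _ ->]].
  by exists y; apply: porbit_id.
pose F (f : {ffun T -> 'I_k}) := [ffun B : O => f (xB B)].
have cO : #|{: O}| = #|porbits pi| by rewrite card_sig.
rewrite -cO -[k in k ^ _]card_ord -card_ffun -(card_in_imset (f := F)).
  exact: max_card.
move=> f1 f2; rewrite !inE => /forallP h1 /forallP h2 e.
have h1' := iter_S (fun x => eqP (h1 x)).
have h2' := iter_S (fun x => eqP (h2 x)).
apply/ffunP => x.
have Bx : porbit pi x \in porbits pi by apply: imset_f.
have rB := hxB (exist (fun B => B \in porbits pi) _ Bx); rewrite /= porbit_sym in rB.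
case/porbitP: rB => i ->.
rewrite h1' h2'.
move/ffunP: e => e; have := e (exist (fun B => B \in porbits pi) _ Bx); rewrite /F !ffunE /= => ->.
by [].
Qed.

Definition recover (T : finType) (k : nat) (f : {ffun T -> 'I_k}) : {set {set T}} :=
  [set [set y | f y == f x] | x : T].

Lemma pblock_act (n : nat) (pi : 'S_n) (P : {set {set 'I_n}})
  (hP : partition P [set: 'I_n]) (hfix : perm_act_partition pi P = P) (x : 'I_n) :
  pblock P (pi x) = [set pi y | y in pblock P x].
Proof.
case/and3P: hP => /eqP hcov htriv h0.
have memP z : pblock P z \in P by apply: pblock_mem; rewrite hcov inE.
apply: def_pblock => //.
  by rewrite -{2}hfix; apply: imset_f.
by apply: imset_f; rewrite mem_pblock hcov inE.
Qed.

Lemma fiber_bound (n k : nat) (pi : 'S_n) (P : {set {set 'I_n}})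
  (hP : partition P [set: 'I_n]) (hk : #|P| = k) (hfix : perm_act_partition pi P = P) :
  k`! <= #|[set f : {ffun 'I_n -> 'I_k} |
             [exists s : 'S_k, [forall x, f (pi x) == s (f x)]] & recover f == P]|.
Proof.
have := lab_exists hP; rewrite hk => -[g [hg gsurj]].
have hgpi : forall x y, (g (pi x) == g (pi y)) = (g x == g y).
  move=> x y; rewrite !hg (pblock_act hP hfix).
  by rewrite mem_imset //; apply: perm_inj.
have [s hs] := exists_sigma gsurj hgpi.
pose Phi (t : 'S_k) := [ffun x => t (g x)].
have Phi_inj : injective Phi.
  move=> t1 t2 e; apply/permP => i; have [x <-] := gsurj i.
  by move/ffunP: e => /(_ x); rewrite !ffunE.
rewrite -card_Sn -(card_imset predT Phi_inj).
apply: subset_leq_card; apply/subsetP => _ /imsetP [t _ ->].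
rewrite inE; apply/andP; split.
  apply/existsP; exists (t^-1 * s * t)%g; apply/forallP => x.
  by rewrite !ffunE hs !permM permK.
apply/eqP/setP => B; apply/imsetP/idP.
  move=> [x _ ->].
  have -> : [set y | Phi t y == Phi t x] = pblock P x.
    by apply/setP => y; rewrite inE !ffunE (inj_eq perm_inj) eq_sym hg.
  by case/and3P: hP => /eqP hcov _ _; apply: pblock_mem; rewrite hcov inE.
move=> BP.
case/and3P: hP => /eqP hcov htriv h0.
have : B != set0 by apply: contraNneq h0 => <-.
case/set0Pn => x hx; exists x => //.
rewrite -(def_pblock htriv BP hx).
by apply/setP => y; rewrite inE !ffunE (inj_eq perm_inj) eq_sym hg.
Qed.

Theorem lemma4p3 (n k : nat) (hk : k %| n) (pi : 'S_n) :
  #|[set P in equipartitions n k | perm_act_partition pi P == P]|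
    <= k ^ ncycles pi.
Proof.
set Fix := [set P in _ | _].
pose S := [set f : {ffun 'I_n -> 'I_k} |
             [exists s : 'S_k, [forall x, f (pi x) == s (f x)]]].
have step0 : k`! * #|Fix| <= \sum_(P in Fix) #|[set f in S | recover f == P]|.
  rewrite mulnC -sum_nat_const; apply: leq_sum => P.
  rewrite !inE => /andP [/and3P [hP /eqP hc _] /eqP hfix].
  have := fiber_bound hP hc hfix.
  congr (_ <= _); apply: eq_card => f; by rewrite !inE.
have step1 : \sum_(P in Fix) #|[set f in S | recover f == P]| <= #|S|.
  rewrite (eq_bigr (fun P => \sum_(f | (f \in S) && (recover f \in Fix) && (recover f == P)) 1)); last first.
    move=> P hP; rewrite -sum1_card; apply: eq_bigl => f; rewrite inE.
    by case: eqP => [->|]; rewrite ?hP ?andbT ?andbF.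
  rewrite -(partition_big _ (mem Fix)); last by move=> f /andP [].
  rewrite -[X in _ <= X]sum1_card big_mkcondr /=.
  apply: leq_sum => f _; by case: (recover f \in Fix).
have step2 : #|S| <= k`! * k ^ ncycles pi.
  rewrite -card_Sn -sum_nat_const -sum1_card.
  apply: (@leq_trans (\sum_(f in S) \sum_(s : 'S_k)
             ([forall x, f (pi x) == s (f x)] : nat))).
    apply: leq_sum => f; rewrite inE => /existsP [s0 hs0].
    by rewrite (bigD1 s0) //= hs0 leq_addr.
  apply: (@leq_trans (\sum_(f : {ffun 'I_n -> 'I_k}) \sum_(s : 'S_k)
             ([forall x, f (pi x) == s (f x)] : nat))).
    by rewrite [X in _ <= X](bigID (mem S)) /= leq_addr.
  rewrite exchange_big /=; apply: leq_sum => s _.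
  apply: leq_trans (bound_Ss pi s).
  rewrite -sum1_card [X in _ <= X]big_mkcond /=; apply: leq_sum => f _.
  by rewrite inE; case: [forall x, _].
have := leq_trans step0 (leq_trans step1 step2).
by rewrite leq_pmul2l ?fact_gt0.
Qed.
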